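(* Let $Q$ be a finite quiver without loops or oriented 2-cycles, with vertices labelled $1,\dots,n$, of which $1,\dots,m$ are mutable. Then the cluster algebra associated to $Q$ can be quantized: there exists a quiver $Q'$ containing $Q$ as a full subquiver, whose principal part (full subquiver on the mutable vertices) coincides with that of $Q$, together with a skew-symmetric integer matrix $\Lambda$ compatible with $Q'$.
   Context: For a quiver with vertices $1,\dots,N$ of which $1,\dots,m$ are mutable and the rest frozen, let $a_{ij}$ be the number of arrows from $i$ to $j$ and $\tilde B$ the $N\times m$ matrix with $b_{ij}=a_{ji}-a_{ij}$. A skew-symmetric $N\times N$ integer matrix $\Lambda$ is compatible with the quiver if $\tilde B^T\Lambda=\tilde I$, where $\tilde I$ is the $m\times N$ matrix whose first $m$ columns form the identity $I_m$ and whose other columns are zero. In $Q'$ the added vertices are frozen. *)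

(* Defs.v *)
From HB Require Import structures.
From mathcomp Require Import all_boot all_order all_algebra.
Set Implicit Arguments. Unset Strict Implicit. Unset Printing Implicit Defensive.
Import Order.TTheory GRing.Theory Num.Theory.
Local Open Scope ring_scope.

(* A finite quiver on vertices 'I_N is given by a : 'I_N -> 'I_N -> nat,
   a i j = number of arrows from i to j. *)
Definition no_loops_no_2cycles (N : nat) (a : 'I_N -> 'I_N -> nat) : Prop :=
  (forall i, a i i = 0%N) /\ (forall i j, a i j = 0%N \/ a j i = 0%N).

(* Exchange matrix B~ (N x m), mutable vertices are the first m: b_ij = a_ji - a_ij *)
Definition ext_exchange_matrix (N m : nat) (hm : (m <= N)%N)
  (a : 'I_N -> 'I_N -> nat) : 'M[int]_(N, m) :=
  \matrix_(i < N, j < m) ((a (widen_ord hm j) i)%:Z - (a i (widen_ord hm j))%:Z).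

Definition ext_identity (m N : nat) : 'M[int]_(m, N) :=
  \matrix_(i < m, j < N) (((i : nat) == (j : nat)) : nat)%:Z.

Definition compatible (N m : nat) (hm : (m <= N)%N) (a : 'I_N -> 'I_N -> nat)
  (L : 'M[int]_N) : Prop :=
  L^T = - L /\ (ext_exchange_matrix hm a)^T *m L = ext_identity m N.

(* Main.v *)
Require Import Defs.
From HB Require Import structures.
From mathcomp Require Import all_boot all_order all_algebra.
Local Open Scope ring_scope.
Import GRing.Theory.

Lemma splitL (m n : nat) (i : 'I_m) : split (lshift n i) = inl i.
Proof. exact: (unsplitK (inl i)). Qed.
Lemma splitR (m n : nat) (i : 'I_n) : split (rshift m i) = inr i.
Proof. exact: (unsplitK (inr i)). Qed.

Section C.
Variables (n m : nat) (hmn : (m <= n)%N) (a : 'I_n -> 'I_n -> nat).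

Definition w (i : 'I_m) : 'I_n := widen_ord hmn i.

Definition a' (x y : 'I_(n + m)) : nat :=
  match split x, split y with
  | inl i, inl j => a i j
  | inl i, inr j => nat_of_bool (nat_of_ord i == nat_of_ord j)
  | _, _ => 0%N
  end.

Definition Lf (x y : 'I_(n + m)) : int :=
  match split x, split y with
  | inl i, inl j => 0
  | inl i, inr j => - (nat_of_bool (nat_of_ord i == nat_of_ord j))%:Z
  | inr i, inl j => (nat_of_bool (nat_of_ord i == nat_of_ord j))%:Z
  | inr i, inr j => (a (w i) (w j))%:Z - (a (w j) (w i))%:Z
  end.

Definition L : 'M[int]_(n + m) := \matrix_(x, y) Lf x y.
End C.

Theorem lemma4p4 (n m : nat) (hmn : (m <= n)%N) (a : 'I_n -> 'I_n -> nat) :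
  no_loops_no_2cycles a ->
  exists (k : nat) (a' : 'I_(n + k) -> 'I_(n + k) -> nat) (L : 'M[int]_(n + k)),
    [/\ no_loops_no_2cycles a',
        (forall i j : 'I_n, a' (lshift k i) (lshift k j) = a i j)
      & compatible (leq_trans hmn (leq_addr k n)) a' L].
Proof.
move=> [Hl H2]; exists m, (@a' n m a), (@L n m hmn a); split.
- split.
  + move=> x; rewrite /a'; case: (split x) => i //.
  + move=> x y; rewrite /a'; case: (split x) => i; case: (split y) => j //; by [left|right].
- by move=> i j; rewrite /a' !splitL.
- split.
  + apply/matrixP => x y; rewrite !mxE /Lf.
    case: (split x) => i; case: (split y) => j //=.
    * by rewrite opprK eq_sym.
    * by rewrite eq_sym.
    * by rewrite opprB.
  + apply/matrixP => i y; rewrite !mxE.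
    have Ew : widen_ord (leq_trans hmn (leq_addr m n)) i = lshift m (@w n m hmn i).
      by apply: val_inj.
    rewrite big_split_ord /=.
    rewrite -[y]splitK; case: (split y) => y' /=.
    * rewrite big1 ?add0r; last first.
        by move=> l _; rewrite !mxE /Lf (splitL _ m) (splitL _ m) mulr0.
      rewrite (bigD1 i) //= big1 ?addr0; last first.
        move=> l Hl'; have {}Hl' : (nat_of_ord i == nat_of_ord l) = false.
          by apply/negbTE; rewrite eq_sym.
        rewrite !mxE /Lf ?(splitR n) ?(splitL _ m) Ew /a' ?(splitR n) ?(splitL _ m).
        by rewrite /= Hl' mul0r.
      rewrite !mxE /Lf ?(splitR n) ?(splitL _ m) Ew /a' ?(splitR n) ?(splitL _ m) eqxx /=.
      by rewrite mul1r.
    * rewrite (bigD1 (@w n m hmn y')) //= big1 ?addr0; last first.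
        move=> l /negbTE Hl'; rewrite !mxE /Lf ?(splitR n) ?(splitL _ m).
        suff -> : (nat_of_ord l == nat_of_ord y') = false by rewrite oppr0 mulr0.
        apply/negbTE/eqP => E; move: Hl'; suff -> : l = @w n m hmn y' by rewrite eqxx.
        by apply: val_inj.
      rewrite (bigD1 i) //= big1 ?addr0; last first.
        move=> l Hl'; have {}Hl' : (nat_of_ord i == nat_of_ord l) = false.
          by apply/negbTE; rewrite eq_sym.
        rewrite !mxE /Lf ?(splitR n) ?(splitL _ m) Ew /a' ?(splitR n) ?(splitL _ m).
        by rewrite /= Hl' mul0r.
      rewrite !mxE /Lf ?(splitR n) ?(splitL _ m) Ew /a' ?(splitR n) ?(splitL _ m) eqxx /=.
      have -> : (i == n + y' :> nat) = false.
        apply/negbTE; rewrite neq_ltn; apply/orP; left.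
        exact: (leq_trans (ltn_ord i) (leq_trans hmn (leq_addr _ _))).
      rewrite /= eqxx /= subr0 mul1r mulrN1.
      by rewrite /w; rewrite addrC subrr.
Qed.
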